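(* Let $\mathbf{P}$ be a poset of width $w$ and let $k\ge0$. Then $|P_k|\le 2\,w^{(3w)^k}$.
   Context: The width of a poset is the maximum size of an antichain. Sets $P_k$: $L_0=\min(\mathbf{P})$, $U_0=\max(\mathbf{P})\setminus L_0$, $P_0=L_0\cup U_0$. For $i\ge1$, call $R\subseteq P_{i-1}$ admissible if $R\cap L_{i-1}$ is downward closed within $L_{i-1}$ and $R\cap U_{i-1}$ is upward closed within $U_{i-1}$; for admissible $R$ let $P_{i-1,R}=\{p\in P: \forall l\in L_{i-1}\,(l\le p\iff l\in R)\text{ and }\forall u\in U_{i-1}\,(p\le u\iff u\in R)\}$. Then $L_i=L_{i-1}\cup\bigcup_R\min(P_{i-1,R})$, $U_i=(U_{i-1}\cup\bigcup_R\max(P_{i-1,R}))\setminus L_i$ (unions over admissible $R$; $\min$ and $\max$ are taken in the induced subposet on $P_{i-1,R}$), and $P_i=L_i\cup U_i$. *)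

(* Defs.v *)
From HB Require Import structures.
From mathcomp Require Import all_boot all_order.
Set Implicit Arguments. Unset Strict Implicit. Unset Printing Implicit Defensive.
Import Order.Theory.
Local Open Scope order_scope.

Section Layers.
Context {disp : Order.disp_t} {T : finPOrderType disp}.

Definition antichain (A : {set T}) : bool :=
  [forall x in A, forall y in A, (x >=< y) ==> (x == y)].

Definition width : nat := \max_(A : {set T} | antichain A) #|A|.

Definition pmin (S : {set T}) : {set T} :=
  [set x in S | [forall y in S, (y <= x) ==> (y == x)]].
Definition pmax (S : {set T}) : {set T} :=
  [set x in S | [forall y in S, (x <= y) ==> (y == x)]].

Definition admissible (L U R : {set T}) : bool :=
  [&& R \subset L :|: U,
      [forall x in L, forall y in L, (x <= y) && (y \in R) ==> (x \in R)] &
      [forall x in U, forall y in U, (x <= y) && (x \in R) ==> (y \in R)]].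

Definition PR (L U R : {set T}) : {set T} :=
  [set p | [forall l in L, (l <= p) == (l \in R)] &&
           [forall u in U, (p <= u) == (u \in R)]].

Definition step (LU : {set T} * {set T}) : {set T} * {set T} :=
  let L := LU.1 in let U := LU.2 in
  let L' := L :|: \bigcup_(R : {set T} | admissible L U R) pmin (PR L U R) in
  let U' := (U :|: \bigcup_(R : {set T} | admissible L U R) pmax (PR L U R)) :\: L' in
  (L', U').

Definition LU0 : {set T} * {set T} :=
  let L0 := pmin [set: T] in (L0, pmax [set: T] :\: L0).

Definition LUk (k : nat) : {set T} * {set T} := iter k step LU0.

Definition Lk (k : nat) : {set T} := (LUk k).1.
Definition Uk (k : nat) : {set T} := (LUk k).2.
Definition Pk (k : nat) : {set T} := Lk k :|: Uk k.

End Layers.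

(* Main.v *)
Require Import Defs.
From HB Require Import structures.
From mathcomp Require Import all_boot all_order zify.

Lemma arithA1 w : 2 <= w -> 2 * w + 2 * w * 2 ^ (2 * w) <= 2 * w ^ ((3 * w) ^ 1).
Proof.
move=> w2; rewrite expn1.
have hb : 2 ^ (2 * w) <= w ^ (2 * w) by rewrite leq_exp2r //; lia.
have ha : 0 < w ^ (2 * w) by rewrite expn_gt0; lia.
have hc : w * (w * w ^ (2 * w)) <= w ^ (3 * w).
  rewrite -!expnS; apply: leq_pexp2l; lia.
move: hb ha hc; move: (2 ^ (2 * w)) (w ^ (2 * w)) (w ^ (3 * w)) => b a c.
nia.
Qed.

Lemma arithA2 w m n : 2 <= w -> 6 <= m -> n <= 2 * w ^ m ->
  n + 2 * w * n.+1 ^ (2 * w) <= 2 * w ^ (3 * w * m).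
Proof.
move=> w2 m6 hn.
have ha : 0 < w ^ m by rewrite expn_gt0; lia.
have hn1 : n.+1 <= w ^ (m + 2).
  rewrite expnD expnS expn1; move: ha hn; move: (w ^ m) => a ha hn.
  have w4 : 4 <= w * w by nia.
  apply: leq_trans (_ : a * 4 <= _); [lia | by rewrite leq_mul2l w4 orbT].
have hX : n.+1 ^ (2 * w) <= w ^ ((m + 2) * (2 * w)).
  by rewrite (expnM w (m + 2) (2 * w)) leq_exp2r //; lia.
have hB : w ^ m <= w ^ ((m + 2) * (2 * w)) by apply: leq_pexp2l; nia.
have hC : w * (w * w ^ ((m + 2) * (2 * w))) <= w ^ (3 * w * m).
  rewrite -!expnS; apply: leq_pexp2l; nia.
have hB1 : 0 < w ^ ((m + 2) * (2 * w)) by rewrite expn_gt0; lia.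
move: hn hX hB hC hB1 ha; move: (n.+1 ^ (2 * w)) (w ^ m) (w ^ ((m + 2) * (2 * w))) (w ^ (3 * w * m)) => X a B C hn hX hB hC hB1 ha.
have h1 : w * X <= w * B by rewrite leq_mul2l hX orbT.
have h2 : (1 + w) * B <= (w * w) * B by rewrite leq_mul2r; apply/orP; right; nia.
lia.
Qed.

Set Implicit Arguments. Unset Strict Implicit. Unset Printing Implicit Defensive.
Import Order.Theory.

Section Aux.
Context {disp : Order.disp_t} {T : finPOrderType disp}.

Lemma card_bigcup_le (P : pred {set T}) (F : {set T} -> {set T}) :
  #|\bigcup_(i | P i) F i| <= \sum_(i | P i) #|F i|.
Proof.
elim/big_rec2: _ => [|i A n Pi IH]; first by rewrite cards0.
by apply: leq_trans (leq_card_setU _ _) _; rewrite leq_add2l.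
Qed.

Lemma antichain_le_width (A : {set T}) : antichain A -> #|A| <= width (T:=T).
Proof. by move=> h; exact: (@leq_bigmax_cond _ (fun B : {set T} => antichain B) (fun B : {set T} => #|B|) A h). Qed.

Lemma pmin_antichain (S : {set T}) : antichain (pmin S).
Proof.
apply/forall_inP => x; rewrite inE => /andP[xS /forall_inP xm].
apply/forall_inP => y; rewrite inE => /andP[yS /forall_inP ym].
apply/implyP; rewrite /Order.comparable => /orP[xy|yx].
  by have := ym x xS; rewrite xy.
by have := xm y yS; rewrite yx /= eq_sym.
Qed.

Lemma pmax_antichain (S : {set T}) : antichain (pmax S).
Proof.
apply/forall_inP => x; rewrite inE => /andP[xS /forall_inP xm].
apply/forall_inP => y; rewrite inE => /andP[yS /forall_inP ym].
apply/implyP; rewrite /Order.comparable => /orP[xy|yx].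
  by have := xm y yS; rewrite xy /= eq_sym.
by have := ym x xS; rewrite yx.
Qed.

Lemma card_pmin (S : {set T}) : #|pmin S| <= width (T:=T).
Proof. exact/antichain_le_width/pmin_antichain. Qed.
Lemma card_pmax (S : {set T}) : #|pmax S| <= width (T:=T).
Proof. exact/antichain_le_width/pmax_antichain. Qed.

Lemma exists_pmax (S : {set T}) x : x \in S -> exists2 y, y \in pmax S & (x <= y)%O.
Proof.
move=> xS; have [n] := ubnP #|[set z in S | (x <= z)%O]|.
elim: n x xS => [//|n IH] x xS Hn.
case: (boolP (x \in pmax S)) => [xm|]; first by exists x.
rewrite inE xS /= => /forall_inPn [y yS]; rewrite negb_imply => /andP[xy yx].
have [z zm yz] : exists2 z, z \in pmax S & (y <= z)%O.
  move: (IH y yS) => IHy; apply: IHy; apply: leq_trans (_ : _ < #|[set z in S | (x <= z)%O]|) _; last by rewrite -ltnS. apply: proper_card.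
  apply/properP; split.
    apply/subsetP => z; rewrite !inE => /andP[-> yz] /=; exact: le_trans yz.
  exists x; first by rewrite inE xS lexx.
  rewrite inE xS /=; apply/negP => yx'.
  by move: yx; rewrite (@le_anti _ _ x y) ?eqxx // xy yx'.
by exists z => //; exact: le_trans yz.
Qed.

Lemma exists_pmin (S : {set T}) x : x \in S -> exists2 y, y \in pmin S & (y <= x)%O.
Proof.
move=> xS; have [n] := ubnP #|[set z in S | (z <= x)%O]|.
elim: n x xS => [//|n IH] x xS Hn.
case: (boolP (x \in pmin S)) => [xm|]; first by exists x.
rewrite inE xS /= => /forall_inPn [y yS]; rewrite negb_imply => /andP[xy yx].
have [z zm yz] : exists2 z, z \in pmin S & (z <= y)%O.
  move: (IH y yS) => IHy; apply: IHy; apply: leq_trans (_ : _ < #|[set z in S | (z <= x)%O]|) _; last by rewrite -ltnS. apply: proper_card.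
  apply/properP; split.
    apply/subsetP => z; rewrite !inE => /andP[-> yz] /=; exact: le_trans xy.
  exists x; first by rewrite inE xS lexx.
  rewrite inE xS /=; apply/negP => yx'.
  by move: yx; rewrite (@le_anti _ _ x y) ?eqxx // xy yx'.
by exists z => //; exact: le_trans xy.
Qed.

End Aux.

Section Aux2.
Context {disp : Order.disp_t} {T : finPOrderType disp}.

Definition adm (L U : {set T}) : {set {set T}} := [set R | admissible L U R].

Lemma LU_disj k : Lk (T:=T) k :&: Uk k = set0.
Proof.
rewrite /Lk /Uk; case: k => [|k] /=; rewrite ?/LU0 /=.
  by rewrite setDE setICA setICr setI0.
by rewrite setDE setICA setICr setI0.
Qed.

Lemma card_big_w (L U : {set T}) (F : {set T} -> {set T}) :
  (forall R, #|F R| <= width (T:=T)) ->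
  #|\bigcup_(R | admissible L U R) F R| <= #|adm L U| * width (T:=T).
Proof.
move=> HF; apply: leq_trans (card_bigcup_le _ _) _.
rewrite (eq_bigl (fun R => R \in adm L U)); last by move=> R; rewrite inE.
rewrite -sum_nat_const; exact: leq_sum.
Qed.

Lemma Pk_step k :
  #|Pk (T:=T) k.+1| <= #|Pk (T:=T) k| + 2 * width (T:=T) * #|adm (Lk k) (Uk k)|.
Proof.
rewrite /Pk /Lk /Uk /LUk iterS -/(LUk k) /step /=.
set L := (LUk k).1; set U := (LUk k).2.
set BL := \bigcup_(R | admissible L U R) pmin (PR L U R).
set BU := \bigcup_(R | admissible L U R) pmax (PR L U R).
have sub : (L :|: BL) :|: ((U :|: BU) :\: (L :|: BL)) \subset (L :|: U) :|: (BL :|: BU).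
  apply/subsetP => x; rewrite !inE.
  by case: (x \in L); case: (x \in U); case: (x \in BL); case: (x \in BU).
apply: leq_trans (subset_leq_card sub) _.
apply: leq_trans (leq_card_setU _ _) _; rewrite leq_add2l.
apply: leq_trans (leq_card_setU _ _) _.
have h1 := @card_big_w L U (fun R => pmin (PR L U R)) (fun R => card_pmin _).
have h2 := @card_big_w L U (fun R => pmax (PR L U R)) (fun R => card_pmax _).
rewrite -/BL -/BU in h1 h2.
apply: leq_trans (leq_add h1 h2) _; by rewrite mulnAC -mulnA mul2n -addnn.
Qed.

Lemma adm_pow (L U : {set T}) : #|adm L U| <= 2 ^ #|L :|: U|.
Proof.
rewrite -card_powerset; apply: subset_leq_card; apply/subsetP => R.
by rewrite !inE => /and3P[].
Qed.

Definition small (X : {set T}) (m : nat) : {set {set T}} := [set S : {set T} | (S \subset X) && (#|S| <= m)].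

Lemma card_small (X : {set T}) m : #|small X m| <= (#|X|.+1) ^ m.
Proof.
elim: m => [|m IH].
  rewrite expn0 -(cards1 (@set0 T)); apply: subset_leq_card.
  apply/subsetP => S; rewrite !inE leqn0 cards_eq0 => /andP[_ ->] //.
have sub : small X m.+1 \subset small X m :|: [set p.1 |: p.2 | p in setX X (small X m)].
  apply/subsetP => S; rewrite !inE => /andP[SX].
  rewrite leq_eqVlt ltnS => /orP[/eqP cS|->]; last by rewrite SX.
  apply/orP; right.
  have : 0 < #|S| by rewrite cS.
  case/card_gt0P => x xS; apply/imsetP; exists (x, S :\ x).
    rewrite !inE /= (subsetP SX _ xS) /=.
    rewrite (subset_trans (subsetDl _ _) SX) /=.
    by move: cS; rewrite (cardsD1 x S) xS add1n => -[->].
  by rewrite /= setD1K.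
apply: leq_trans (subset_leq_card sub) _.
apply: leq_trans (leq_card_setU _ _) _.
apply: leq_trans (leq_add (leqnn _) (leq_imset_card _ _)) _.
rewrite cardsX expnS mulSn; exact: leq_add IH (leq_mul (leqnn _) IH).
Qed.

End Aux2.

Section Aux3.
Context {disp : Order.disp_t} {T : finPOrderType disp}.
Variables (L U : {set T}).
Hypothesis disj : L :&: U = set0.

Definition fR (R : {set T}) := pmax (R :&: L) :|: pmin (R :&: U).
Definition gS (S : {set T}) : {set T} :=
  [set x in L | [exists y in S :&: L, (x <= y)%O]] :|:
  [set x in U | [exists y in S :&: U, (y <= x)%O]].

Lemma pmax_sub (S : {set T}) y : y \in pmax S -> y \in S.
Proof. by rewrite inE => /andP[]. Qed.
Lemma pmin_sub (S : {set T}) y : y \in pmin S -> y \in S.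
Proof. by rewrite inE => /andP[]. Qed.

Lemma notLU y : y \in L -> y \in U -> False.
Proof. move=> yL yU; have : y \in L :&: U by rewrite inE yL yU.
by rewrite disj inE. Qed.

Lemma gf R : admissible L U R -> gS (fR R) = R.
Proof.
case/and3P => RLU /forall_inP dL /forall_inP uU.
apply/setP => x; rewrite /gS /fR inE; apply/idP/idP.
  case/orP; rewrite inE => /andP[xL /exists_inP[y]]; rewrite !inE => /andP[yf yY] xy.
    case/orP: yf => /andP[/andP[yR yZ] _].
      by have := forall_inP (dL x xL) y yY; rewrite xy yR.
    by case: (notLU yY yZ).
  case/orP: yf => /andP[/andP[yR yZ] _].
    by case: (notLU yZ yY).
  by have := forall_inP (uU y yY) x xL; rewrite xy yR.
move=> xR; have /setUP[xL|xU] := subsetP RLU x xR.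
  have [|y ym xy] := @exists_pmax _ _ (R :&: L) x; first by rewrite inE xR xL.
  apply/orP; left; rewrite inE xL /=; apply/exists_inP; exists y => //.
  apply/setIP; split; first by apply/setUP; left.
  by have := pmax_sub ym; case/setIP.
have [|y ym xy] := @exists_pmin _ _ (R :&: U) x; first by rewrite inE xR xU.
apply/orP; right; rewrite inE xU /=; apply/exists_inP; exists y => //.
apply/setIP; split; first by apply/setUP; right.
by have := pmin_sub ym; case/setIP.
Qed.

Lemma adm_poly : #|adm L U| <= (#|L :|: U|.+1) ^ (2 * width (T:=T)).
Proof.
have inj : {in adm L U &, injective fR}.
  move=> R1 R2; rewrite !inE => a1 a2 e.
  by rewrite -(gf a1) -(gf a2) e.
rewrite -(card_in_imset inj).
apply: leq_trans (card_small (L :|: U) (2 * width)).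
apply: subset_leq_card; apply/subsetP => S /imsetP[R]; rewrite inE => aR ->.
rewrite inE; apply/andP; split.
  apply/subsetP => y; rewrite inE => /orP[/pmax_sub|/pmin_sub]; rewrite !inE => /andP[_ ->] //.
  by rewrite orbT.
apply: leq_trans (leq_card_setU _ _) _.
by rewrite mul2n -addnn; apply: leq_add; [apply: card_pmax | apply: card_pmin].
Qed.

End Aux3.

Section Aux5.
Context {disp : Order.disp_t} {T : finPOrderType disp}.

Lemma width_pos (x : T) : 0 < width (T:=T).
Proof.
apply: leq_trans (antichain_le_width (A := [set x]) _); first by rewrite cards1.
apply/forall_inP => a; rewrite inE => /eqP ->.
by apply/forall_inP => b; rewrite inE => /eqP ->; rewrite eqxx implybT.
Qed.

Lemma card_P0 : #|Pk (T:=T) 0| <= 2 * width (T:=T).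
Proof.
rewrite /Pk /Lk /Uk /= /LU0 /=.
apply: leq_trans (leq_card_setU _ _) _.
rewrite mul2n -addnn; apply: leq_add; first exact: card_pmin.
apply: leq_trans (card_pmax [set: T]); apply: subset_leq_card; exact: subsetDl.
Qed.

Section W1.
Hypothesis w1 : width (T:=T) = 1.

Lemma total1 (x y : T) : (x >=< y)%O.
Proof.
apply/negPn/negP => nc.
have xy : x != y by apply: contraNneq nc => ->; rewrite /Order.comparable lexx.
have : 2 <= width (T:=T).
  apply: leq_trans (antichain_le_width (A := [set x; y]) _); first by rewrite cards2 xy.
  apply/forall_inP => a; rewrite !inE => /orP[] /eqP ->;
  apply/forall_inP => b; rewrite !inE => /orP[] /eqP ->; rewrite ?eqxx ?implybT //.
    by rewrite (negbTE nc).
  by rewrite Order.POrderTheory.comparable_sym (negbTE nc).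
by rewrite w1.
Qed.

Let L0 : {set T} := pmin [set: T].
Let U0 : {set T} := pmax [set: T] :\: L0.

Lemma hl l p : l \in L0 -> (l <= p)%O.
Proof.
rewrite inE => /andP[_ /forall_inP m].
have := total1 l p; rewrite /Order.comparable => /orP[//|pl].
by have := m p (in_setT p); rewrite pl /= => /eqP ->.
Qed.

Lemma hu u p : u \in U0 -> (p <= u)%O.
Proof.
rewrite inE => /andP[_]; rewrite inE => /andP[_ /forall_inP m].
have := total1 u p; rewrite /Order.comparable => /orP[up|//].
by have := m p (in_setT p); rewrite up /= => /eqP ->.
Qed.

Lemma memPR R p : (p \in PR L0 U0 R) = [forall l in L0, l \in R] && [forall u in U0, u \in R].
Proof.
rewrite inE; congr andb; apply/forall_inP/forall_inP => h z zL.
- by have := h z zL; rewrite (hl p zL) => /eqP <-.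
- by rewrite (hl p zL) (h z zL).
- by have := h z zL; rewrite (hu p zL) => /eqP <-.
- by rewrite (hu p zL) (h z zL).
Qed.

Lemma step0 : step (L0, U0) = (L0, U0).
Proof.
rewrite /step /=.
have HL : \bigcup_(R | admissible L0 U0 R) pmin (PR L0 U0 R) \subset L0.
  apply/bigcupsP => R _; apply/subsetP => x; rewrite inE => /andP[xP /forall_inP m].
  rewrite inE; apply/andP; split => //; apply/forall_inP => y _.
  by apply: m; rewrite memPR -(memPR R x).
have HU : \bigcup_(R | admissible L0 U0 R) pmax (PR L0 U0 R) \subset pmax [set: T].
  apply/bigcupsP => R _; apply/subsetP => x; rewrite inE => /andP[xP /forall_inP m].
  rewrite inE; apply/andP; split => //; apply/forall_inP => y _.
  by apply: m; rewrite memPR -(memPR R x).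
rewrite (setUidPl HL); congr pair.
apply/setP => x; rewrite !in_setD in_setU in_setD.
case: (boolP (x \in L0)) => //= xL.
apply/idP/idP => [/orP[//|]|->//]; exact: (subsetP HU).
Qed.

Lemma LUk1 k : LUk (T:=T) k = (L0, U0).
Proof. by elim: k => [//|k IH]; rewrite /LUk iterS -/(LUk k) IH step0. Qed.

Lemma card_w1 k : #|Pk (T:=T) k| <= 2.
Proof.
have -> : Pk (T:=T) k = Pk 0 by rewrite /Pk /Lk /Uk LUk1.
by have := card_P0; rewrite w1.
Qed.
End W1.

End Aux5.

Theorem lemma3 (disp : Order.disp_t) (T : finPOrderType disp) (w k : nat) :
  width (T := T) = w ->
  #|Pk (T := T) k| <= 2 * w ^ ((3 * w) ^ k).
Proof.
move=> <-.
case: (set_0Vmem (Pk (T:=T) k)) => [->|[x _]]; first by rewrite cards0.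
have wp := width_pos x.
case: (leqP (width (T:=T)) 1) => [w1|w2].
  have w1' : width (T:=T) = 1 by lia.
  by rewrite w1' exp1n muln1; exact: card_w1.
elim: k => [|k IH]; first by rewrite expn0 expn1; exact: card_P0.
apply: leq_trans (Pk_step k) _.
have A1 := adm_pow (Lk (T:=T) k) (Uk (T:=T) k).
have A2 := adm_poly (LU_disj (T:=T) k).
rewrite -/(Pk k) in A1 A2.
case: k IH A1 A2 => [|k] IH A1 A2.
  rewrite expn0 expn1 in IH.
  apply: leq_trans (arithA1 _ w2).
  apply: leq_add => //; rewrite leq_mul2l; apply/orP; right.
  apply: leq_trans A1 _; apply: leq_pexp2l => //.
set m := (3 * width (T:=T)) ^ k.+1 in IH *.
have m6 : 6 <= m.
  apply: leq_trans (_ : 3 * width (T:=T) <= m); first lia.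
  by rewrite -{1}(expn1 (3 * width (T:=T))) /m; apply: leq_pexp2l; lia.
rewrite expnS -/m.
apply: leq_trans (@arithA2 _ _ _ w2 m6 IH).
apply: leq_add => //; rewrite leq_mul2l A2 orbT //.
Qed.
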